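(* Let $(b,c)$ be a weighted graph over $X$ and let $m$ be a measure on $X$ with $m(X)<\infty$. Let $\sigma$ be a pseudometric on $X$ which is intrinsic with respect to $m$. (a) If $c\equiv0$, then $\sigma\le\sqrt{m(X)}\,\varrho$ on $X\times X$. (b) If $C:=\sum_{x\in X}c(x)<\infty$ and $\sigma\le S$ on $X\times X$ for some constant $S\ge0$, then $\sigma\le\sqrt{m(X)+CS^2}\,\varrho$ on $X\times X$.
   Context: Let $X$ be a countably infinite set. A weighted graph $(b,c)$ over $X$ consists of a symmetric $b:X\times X\to[0,\infty)$ with $b(x,x)=0$ and $\sum_{y}b(x,y)<\infty$ for all $x$, and $c:X\to[0,\infty)$. For $f:X\to\mathbb C$ let $\widetilde Q(f)=\frac12\sum_{x,y}b(x,y)|f(x)-f(y)|^2+\sum_x c(x)|f(x)|^2\in[0,\infty]$ and $\widetilde D=\{f:\widetilde Q(f)<\infty\}$. Define $\varrho(x,y)=\sup\{|f(x)-f(y)|:f\in\widetilde D,\ \widetilde Q(f)\le1\}\in[0,\infty]$. A measure on $X$ is a function $m:X\to[0,\infty)$, with $m(A)=\sum_{x\in A}m(x)$. A pseudometric $\sigma:X\times X\to[0,\infty)$ is called intrinsic with respect to $m$ if $\frac12\sum_{y\in X}b(x,y)\sigma(x,y)^2\le m(x)$ for every $x\in X$. *)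

(* Defs.v *)
From Stdlib Require Export Reals List.
Export ListNotations.
Open Scope R_scope.

Definition fsum {A : Type} (l : list A) (f : A -> R) : R :=
  fold_right (fun a acc => f a + acc) 0 l.

(* Unordered sum of a nonnegative family over an arbitrary type:
   [has_sum f L] means L is the supremum of all finite partial sums
   (sums over duplicate-free finite lists); in particular the sum is finite. *)
Definition has_sum {A : Type} (f : A -> R) (L : R) : Prop :=
  is_lub (fun s => exists l : list A, NoDup l /\ s = fsum l f) L.

Definition summable {A : Type} (f : A -> R) : Prop :=
  exists M, forall l : list A, NoDup l -> fsum l f <= M.

Definition countably_infinite (X : Type) : Prop :=
  exists e : nat -> X, (forall n k, e n = e k -> n = k) /\ (forall x, exists n, e n = x).

Definition C := (R * R)%type.
Definition Cminus (z w : C) : C := (fst z - fst w, snd z - snd w).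
Definition Cnorm2 (z : C) : R := fst z * fst z + snd z * snd z.
Definition Cnorm (z : C) : R := sqrt (Cnorm2 z).

Definition weighted_graph {X : Type} (b : X -> X -> R) (c : X -> R) : Prop :=
  (forall x y, 0 <= b x y) /\ (forall x y, b x y = b y x) /\ (forall x, b x x = 0) /\
  (forall x, summable (b x)) /\ (forall x, 0 <= c x).

(* [Qtilde_le b c f r] : the (extended-valued) form
   Q~(f) = 1/2 sum_{x,y} b(x,y)|f x - f y|^2 + sum_x c(x)|f x|^2
   is finite and <= r (i.e. f is in D~ and Q~(f) <= r). *)
Definition Qtilde_le {X : Type} (b : X -> X -> R) (c : X -> R) (f : X -> C) (r : R) : Prop :=
  forall (l1 : list (X * X)) (l2 : list X), NoDup l1 -> NoDup l2 ->
    / 2 * fsum l1 (fun p => b (fst p) (snd p) * Cnorm2 (Cminus (f (fst p)) (f (snd p))))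
    + fsum l2 (fun x => c x * Cnorm2 (f x)) <= r.

(* [rho_le b c x y t] : varrho(x,y) <= t, where
   varrho(x,y) = sup { |f x - f y| : f in D~, Q~(f) <= 1 } in [0, oo]. *)
Definition rho_le {X : Type} (b : X -> X -> R) (c : X -> R) (x y : X) (t : R) : Prop :=
  forall f : X -> C, Qtilde_le b c f 1 -> Cnorm (Cminus (f x) (f y)) <= t.

(* [bounded_by_rho b c sigma K] : sigma <= K * varrho on X x X,
   with varrho extended-valued (the inequality is vacuous where varrho = oo). *)
Definition bounded_by_rho {X : Type} (b : X -> X -> R) (c : X -> R)
    (sigma : X -> X -> R) (K : R) : Prop :=
  forall x y t, rho_le b c x y t -> sigma x y <= K * t.

Definition pseudometric {X : Type} (sigma : X -> X -> R) : Prop :=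
  (forall x y, 0 <= sigma x y) /\ (forall x, sigma x x = 0) /\
  (forall x y, sigma x y = sigma y x) /\
  (forall x y z, sigma x z <= sigma x y + sigma y z).

Definition intrinsic {X : Type} (b : X -> X -> R) (m : X -> R) (sigma : X -> X -> R) : Prop :=
  forall x, forall l : list X, NoDup l ->
    / 2 * fsum l (fun y => b x y * (sigma x y)^2) <= m x.

(* Main.v *)
Require Import Defs.
From Stdlib Require Import Reals List Lra ClassicalEpsilon.
Open Scope R_scope.

Lemma fsum_le {A} (l : list A) f g : (forall a, f a <= g a) -> fsum l f <= fsum l g.
Proof. intros H; induction l; simpl; [lra| specialize (H a); lra]. Qed.

Lemma fsum_ext {A} (l : list A) f g : (forall a, f a = g a) -> fsum l f = fsum l g.
Proof. intros H; induction l; simpl; [lra| rewrite H, IHl; auto]. Qed.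

Lemma fsum_ge0 {A} (l : list A) f : (forall a, 0 <= f a) -> 0 <= fsum l f.
Proof. intros H; induction l; simpl; [lra| specialize (H a); lra]. Qed.

Lemma fsum_scal {A} (l : list A) f k : fsum l (fun a => k * f a) = k * fsum l f.
Proof. induction l; simpl; [ring| rewrite IHl; ring]. Qed.

Lemma fsum_filter {A} (l : list A) g (P : A -> bool) :
  fsum l g = fsum (filter P l) g + fsum (filter (fun a => negb (P a)) l) g.
Proof. induction l; simpl; [lra|]. destruct (P a); simpl; lra. Qed.

Lemma fsum_snd {X} (x : X) (l : list (X*X)) g :
  (forall p, In p l -> fst p = x) -> fsum l g = fsum (map snd l) (fun y => g (x,y)).
Proof.
  induction l as [|[a1 a2] l IH]; intros H; simpl; [lra|].
  rewrite IH by (intros; apply H; right; auto).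
  assert (a1 = x) by (apply (H (a1,a2)); left; auto). subst. reflexivity.
Qed.

Lemma nodup_snd {X} (x : X) (l : list (X*X)) :
  NoDup l -> (forall p, In p l -> fst p = x) -> NoDup (map snd l).
Proof.
  induction l as [|a l IH]; intros Hn H; simpl; [constructor|].
  inversion Hn; subst. constructor.
  - intro Hi. apply in_map_iff in Hi. destruct Hi as [p [Hp Hpl]].
    assert (fst p = fst a) by (rewrite (H p), (H a); auto; [left|right]; auto).
    apply H2. replace a with p; auto. destruct p, a; simpl in *; subst; auto.
  - apply IH; auto; intros; apply H; right; auto.
Qed.

Lemma group {X} (g : X*X -> R) (h : X -> R) (Hg : forall p, 0 <= g p)
  (Hh : forall x ly, NoDup ly -> fsum ly (fun y => g (x,y)) <= h x) :
  forall L, NoDup L -> forall l1, NoDup l1 -> (forall p, In p l1 -> In (fst p) L) ->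
  fsum l1 g <= fsum L h.
Proof.
  induction L as [|x L IH]; intros HL l1 Hl1 Hin.
  - destruct l1 as [|p l1]; simpl; [lra|]. exfalso; apply (Hin p); left; auto.
  - inversion HL; subst.
    set (P := fun p : X*X => if excluded_middle_informative (fst p = x) then true else false).
    rewrite (fsum_filter l1 g P). simpl.
    assert (HP : forall p, In p (filter P l1) -> fst p = x).
    { intros p Hp. apply filter_In in Hp. destruct Hp as [_ Hp]. unfold P in Hp.
      destruct (excluded_middle_informative (fst p = x)); auto; discriminate. }
    rewrite (fsum_snd x _ g HP).
    assert (G1 := Hh x _ (nodup_snd x _ (NoDup_filter _ Hl1) HP)).
    assert (G2 : fsum (filter (fun a => negb (P a)) l1) g <= fsum L h).
    { apply IH; auto. apply NoDup_filter; auto.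
      intros p Hp. apply filter_In in Hp. destruct Hp as [Hp Hq]. unfold P in Hq.
      destruct (excluded_middle_informative (fst p = x)); [discriminate|].
      destruct (Hin p Hp); auto. congruence. }
    lra.
Qed.

Lemma core {X} (b : X -> X -> R) (c : X -> R) (sigma : X -> X -> R) (K2 : R)
  (Hb : forall x y, 0 <= b x y) (Hps : pseudometric sigma) x0 y0 t
  (Hkey : forall (l1 : list (X*X)) (l2 : list X), NoDup l1 -> NoDup l2 ->
     / 2 * fsum l1 (fun p => b (fst p) (snd p) * (sigma (fst p) (snd p))^2)
     + fsum l2 (fun z => c z * (sigma x0 z)^2) <= K2)
  (Hr : rho_le b c x0 y0 t) : sigma x0 y0 <= sqrt K2 * t.
Proof.
  destruct Hps as [H0 [Hd [Hs Ht]]].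
  assert (Hlam : forall lam, 0 <= lam -> lam^2 * K2 <= 1 -> lam * sigma x0 y0 <= t).
  { intros lam Hl HK.
    set (f := fun z : X => (lam * sigma x0 z, 0) : Defs.C).
    specialize (Hr f). unfold Cnorm, Cnorm2, Cminus, f in Hr; simpl in Hr.
    rewrite Hd in Hr.
    replace ((lam * 0 - lam * sigma x0 y0) * (lam * 0 - lam * sigma x0 y0) + (0 - 0) * (0 - 0))
      with ((lam * sigma x0 y0)^2) in Hr by ring.
    rewrite sqrt_pow2 in Hr by (apply Rmult_le_pos; auto).
    apply Hr. intros l1 l2 N1 N2. specialize (Hkey l1 l2 N1 N2).
    eapply Rle_trans; [|exact HK].
    replace (lam^2 * K2) with (lam^2 * K2) by ring.
    assert (E1 : fsum l1 (fun p => b (fst p) (snd p) * Cnorm2 (Cminus (f (fst p)) (f (snd p))))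
       <= lam^2 * fsum l1 (fun p => b (fst p) (snd p) * (sigma (fst p) (snd p))^2)).
    { rewrite <- fsum_scal. apply fsum_le. intros [z w]; simpl.
      unfold Cnorm2, Cminus, f; simpl.
      assert (A1 := Ht x0 z w). assert (A2 := Ht x0 w z). assert (A3 := Hs z w).
      assert (A4 : Rabs (sigma x0 z - sigma x0 w) <= sigma z w)
        by (apply Rabs_le; lra).
      assert (A5 : (sigma x0 z - sigma x0 w)^2 <= (sigma z w)^2).
      { rewrite <- (pow2_abs (sigma x0 z - sigma x0 w)).
        apply pow_incr; split; auto. apply Rabs_pos. }
      specialize (Hb z w).
      replace ((lam * sigma x0 z - lam * sigma x0 w) * (lam * sigma x0 z - lam * sigma x0 w) + (0 - 0) * (0 - 0))
        with (lam^2 * (sigma x0 z - sigma x0 w)^2) by ring.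
      assert (0 <= lam^2) by (apply pow2_ge_0).
      assert (Q : 0 <= b z w * (lam^2 * (sigma z w ^ 2 - (sigma x0 z - sigma x0 w)^2))).
      { apply Rmult_le_pos; auto. apply Rmult_le_pos; auto. lra. }
      simpl in *. nra. }
    assert (E2 : fsum l2 (fun z => c z * Cnorm2 (f z))
       = lam^2 * fsum l2 (fun z => c z * (sigma x0 z)^2)).
    { rewrite <- fsum_scal. apply fsum_ext. intros z. unfold Cnorm2, f; simpl. ring. }
    unfold f in E1, E2. rewrite E2. assert (0 <= lam^2) by apply pow2_ge_0.
    assert (lam^2 * (/ 2 * fsum l1 (fun p => b (fst p) (snd p) * (sigma (fst p) (snd p))^2)
     + fsum l2 (fun z => c z * (sigma x0 z)^2)) <= lam^2 * K2)
      by (apply Rmult_le_compat_l; auto).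
    lra. }
  assert (HK2 : 0 <= K2).
  { specialize (Hkey nil nil (NoDup_nil _) (NoDup_nil _)). simpl in Hkey. lra. }
  destruct (Rle_lt_or_eq_dec 0 K2 HK2) as [Kp|K0].
  - assert (Sp : 0 < sqrt K2) by (apply sqrt_lt_R0; auto).
    specialize (Hlam (/ sqrt K2) (Rlt_le _ _ (Rinv_0_lt_compat _ Sp))).
    assert (E : (/ sqrt K2)^2 * K2 = 1).
    { rewrite <- (sqrt_sqrt K2) at 2 by lra. field. lra. }
    rewrite E in Hlam. specialize (Hlam (Rle_refl _)).
    apply (Rmult_le_compat_l (sqrt K2)) in Hlam; [|lra].
    rewrite <- Rmult_assoc, Rinv_r in Hlam by lra. lra.
  - subst K2. rewrite sqrt_0, Rmult_0_l.
    destruct (Rle_or_lt (sigma x0 y0) 0) as [Hle|Hgt]; auto.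
    specialize (Hlam ((Rabs t + 1) / sigma x0 y0)).
    assert (0 <= (Rabs t + 1) / sigma x0 y0).
    { apply Rlt_le, Rdiv_lt_0_compat; auto. pose proof (Rabs_pos t); lra. }
    specialize (Hlam H (ltac:(lra))).
    unfold Rdiv in Hlam. rewrite Rmult_assoc, Rinv_l in Hlam by lra.
    pose proof (Rle_abs t). lra.
Qed.

Lemma partA {X} (b : X -> X -> R) (m : X -> R) (mX : R) (sigma : X -> X -> R)
  (Hb : forall x y, 0 <= b x y) (HmX : has_sum m mX) (Hint : intrinsic b m sigma)
  (l1 : list (X*X)) : NoDup l1 ->
  / 2 * fsum l1 (fun p => b (fst p) (snd p) * (sigma (fst p) (snd p))^2) <= mX.
Proof.
  intros N1.
  set (dec := fun a b : X => excluded_middle_informative (a = b)).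
  set (L := nodup dec (map fst l1)).
  assert (G := group (fun p => b (fst p) (snd p) * (sigma (fst p) (snd p))^2)
      (fun x => 2 * m x)).
  assert (H : fsum l1 (fun p => b (fst p) (snd p) * (sigma (fst p) (snd p))^2)
      <= fsum L (fun x => 2 * m x)).
  { apply G; auto.
    - intros p. apply Rmult_le_pos; auto. apply pow2_ge_0.
    - intros x ly Nly. specialize (Hint x ly Nly). change (fsum ly (fun y => b x y * sigma x y ^ 2) <= 2 * m x). lra.
    - apply NoDup_nodup.
    - intros p Hp. apply nodup_In. apply in_map; auto. }
  rewrite fsum_scal in H.
  destruct HmX as [Hub _].
  assert (fsum L m <= mX) by (apply Hub; exists L; split; auto; apply NoDup_nodup).
  lra.
Qed.

Theorem mainTheorem3 (X : Type) (HX : countably_infinite X)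
  (b : X -> X -> R) (c : X -> R) (Hbc : weighted_graph b c)
  (m : X -> R) (Hm : forall x, 0 <= m x) (mX : R) (HmX : has_sum m mX)
  (sigma : X -> X -> R) (Hps : pseudometric sigma) (Hint : intrinsic b m sigma) :
  ((forall x, c x = 0) -> bounded_by_rho b c sigma (sqrt mX)) /\
  (forall (Cc S : R), has_sum c Cc -> 0 <= S -> (forall x y, sigma x y <= S) ->
     bounded_by_rho b c sigma (sqrt (mX + Cc * S ^ 2))).
Proof.
  destruct Hbc as [Hb [_ [_ [_ Hc]]]].
  split.
  - intros Hc0 x y t Hr. apply (core b c sigma mX Hb Hps x y t); auto.
    intros l1 l2 N1 N2.
    assert (E : fsum l2 (fun z => c z * sigma x z ^ 2) = 0).
    { rewrite (fsum_ext _ _ (fun z => 0 * c z)) by (intro; rewrite Hc0; ring). rewrite fsum_scal; ring. }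
    rewrite E. pose proof (partA b m mX sigma Hb HmX Hint l1 N1). lra.
  - intros Cc S HC HS HsS x y t Hr.
    apply (core b c sigma _ Hb Hps x y t); auto.
    intros l1 l2 N1 N2.
    pose proof (partA b m mX sigma Hb HmX Hint l1 N1).
    assert (fsum l2 (fun z => c z * sigma x z ^ 2) <= fsum l2 (fun z => S^2 * c z)).
    { apply fsum_le. intros z. rewrite Rmult_comm. apply Rmult_le_compat_r; auto.
      destruct Hps as [H0 _]. apply pow_incr; split; auto. }
    rewrite fsum_scal in H0.
    destruct HC as [Hub _].
    assert (fsum l2 c <= Cc) by (apply Hub; exists l2; auto).
    assert (0 <= S^2) by apply pow2_ge_0.
    assert (S^2 * fsum l2 c <= S^2 * Cc) by (apply Rmult_le_compat_l; auto).
    lra.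
Qed.
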